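(* Let $G=(V,E,m,w)$ be a weighted graph admitting an intrinsic metric $\rho$ such that every ball $B_R(x)=\{y\in V:\rho(y,x)\le R\}$ ($x\in V$, $R>0$) is a finite set and the jump size $s:=\sup_{x\sim y}\rho(x,y)$ is finite. Suppose $G$ has polynomial volume growth with respect to $\rho$, i.e. there are $x_0\in V$ and constants $\alpha, C$ such that $m(B_R(x_0))\le C(1+R)^{\alpha}$ for all $R>0$. Then for all real $k\ge 1$, $$\dim \widetilde{\mathcal{P}}_{2k}(G)\le (k+1)\dim \mathcal{H}_{2k}(G).$$
   Context: A weighted graph $G=(V,E,m,w)$ consists of a locally finite, simple, undirected, connected graph $(V,E)$, a symmetric edge weight $w:E\to(0,\infty)$, $\{x,y\}\mapsto w_{xy}=w_{yx}$ (extended by $w_{xy}=0$ if $x\not\sim y$), and a vertex weight $m:V\to(0,\infty)$; $m(\Omega)=\sum_{x\in\Omega}m_x$. The Laplacian is $\Delta f(x)=\sum_{y\sim x}\frac{w_{xy}}{m_x}(f(y)-f(x))$. A (pseudo)metric $\rho:V\times V\to[0,\infty)$ (symmetric, triangle inequality, $\rho(x,x)=0$) is intrinsic if $\sum_{y\sim x}w_{xy}\rho^2(x,y)\le m_x$ for all $x\in V$. $\mathcal{H}_k(G)$ is the space of functions $f$ on $V$ with $\Delta f=0$ such that there exist $x_0\in V$ and $C_f$ with $\sup_{x\in B_R(x_0)}|f(x)|\le C_f(1+R)^k$ for all $R>0$. Let $\mathbb{Z}_-=\mathbb{Z}\cap(-\infty,0]$. An ancient solution of the discrete-time heat equation is a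 function $v$ on $V\times\mathbb{Z}_-$ with $v(x,t)-v(x,t-1)=\Delta v(x,t)$ for all $x\in V$, $t\in\mathbb{Z}_-$. $\widetilde{\mathcal{P}}_k(G)$ is the space of such ancient solutions $v$ for which there are $x_0\in V$ and $C_v$ with $\sup_{(x,t)\in B_R(x_0)\times([-R^2,0]\cap\mathbb{Z})}|v(x,t)|\le C_v(1+R)^k$ for all $R>0$. *)

(* Defs.v *)
From mathcomp Require Import all_boot all_order all_algebra.
From mathcomp Require Import all_classical all_reals all_analysis.
Set Implicit Arguments. Unset Strict Implicit. Unset Printing Implicit Defensive.
Import Order.TTheory GRing.Theory Num.Theory.
Local Open Scope ring_scope.

Section Defs.
Variables (R : realType) (V : eqType).

(* A weighted graph: locally finite simple undirected connected graph given
   by the finite neighbour lists [adj x], symmetric positive edge weights w,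
   positive vertex weights m. *)
Definition weighted_graph (adj : V -> seq V) (w : V -> V -> R) (m : V -> R) : Prop :=
  (forall x, uniq (adj x)) /\
  (forall x, x \notin adj x) /\
  (forall x y, (y \in adj x) = (x \in adj y)) /\
  (forall x y, y \in adj x -> 0 < w x y) /\
  (forall x y, w x y = w y x) /\
  (forall x, 0 < m x) /\
  (forall x y, exists p : seq V,
      path (fun a b => b \in adj a) x p && (last x p == y)).

Definition laplacian (adj : V -> seq V) (w : V -> V -> R) (m : V -> R)
  (f : V -> R) (x : V) : R :=
  \sum_(y <- adj x) (w x y / m x) * (f y - f x).

Definition pseudometric (rho : V -> V -> R) : Prop :=
  [/\ (forall x, rho x x = 0),
      (forall x y, rho x y = rho y x),
      (forall x y, 0 <= rho x y) &
      (forall x y z, rho x z <= rho x y + rho y z)].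

Definition intrinsic (adj : V -> seq V) (w : V -> V -> R) (m : V -> R)
  (rho : V -> V -> R) : Prop :=
  pseudometric rho /\
  forall x, \sum_(y <- adj x) w x y * rho x y ^+ 2 <= m x.

Definition finite_balls (rho : V -> V -> R) : Prop :=
  forall x r, 0 < r -> exists s : seq V, forall y, (y \in s) = (rho y x <= r).

Definition finite_jump (adj : V -> seq V) (rho : V -> V -> R) : Prop :=
  exists s : R, forall x y, y \in adj x -> rho x y <= s.

Definition poly_volume_growth (m : V -> R) (rho : V -> V -> R) : Prop :=
  exists (x0 : V) (alpha C : R), forall r, 0 < r ->
    forall s : seq V, uniq s -> (forall y, (y \in s) = (rho y x0 <= r)) ->
      \sum_(y <- s) m y <= C * powR (1 + r) alpha.

Definition harmonic_poly (adj : V -> seq V) (w : V -> V -> R) (m : V -> R)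
  (rho : V -> V -> R) (d : R) (f : V -> R) : Prop :=
  (forall x, laplacian adj w m f x = 0) /\
  exists (x0 : V) (C : R), forall r, 0 < r ->
    forall x, rho x x0 <= r -> `|f x| <= C * powR (1 + r) d.

(* Ancient solutions: u x n stands for v(x, -n), n : nat, so times range
   over Z_- = {0,-1,-2,...}.  Heat equation v(x,t)-v(x,t-1) = Δ v(x,t). *)
Definition ancient_poly (adj : V -> seq V) (w : V -> V -> R) (m : V -> R)
  (rho : V -> V -> R) (d : R) (u : V -> nat -> R) : Prop :=
  (forall x n, u x n - u x n.+1 = laplacian adj w m (fun y => u y n) x) /\
  exists (x0 : V) (C : R), forall r, 0 < r ->
    forall x (n : nat), rho x x0 <= r -> n%:R <= r ^+ 2 ->
      `|u x n| <= C * powR (1 + r) d.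

End Defs.

Definition lin_indep (R : realType) (D : Type) (N : nat) (f : 'I_N -> D -> R) : Prop :=
  forall c : 'I_N -> R, (forall z, \sum_(i < N) c i * f i z = 0) -> forall i, c i = 0.

Definition dim_le (R : realType) (D : Type) (S : (D -> R) -> Prop) (n : nat) : Prop :=
  forall N (f : 'I_N -> D -> R), (forall i, S (f i)) -> lin_indep f -> (N <= n)%N.

Definition uncurry_fun (R : realType) (V : Type) (u : V -> nat -> R) : V * nat -> R :=
  fun p => u p.1 p.2.

(* Main.v *)
Require Import Defs.
From mathcomp Require Import all_boot all_order all_algebra.
From mathcomp Require Import all_classical all_reals all_analysis.
From mathcomp Require Import lra ring zify.
Import Order.TTheory GRing.Theory Num.Theory.
Local Open Scope ring_scope.
Set Implicit Arguments. Unset Strict Implicit. Unset Printing Implicit Defensive.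

Section Generic.
Variable R : realType.

Lemma sum_supp (T : eqType) (L1 L2 : seq T) (F : T -> R) :
  uniq L1 -> uniq L2 -> (forall x, F x != 0 -> (x \in L1) && (x \in L2)) ->
  \sum_(x <- L1) F x = \sum_(x <- L2) F x.
Proof.
move=> u1 u2 H.
Timeout 10 rewrite (bigID (fun x => x \in L2)) /=.
Timeout 10 rewrite [X in _ + X]big1 ?addr0; last first.
  move=> x /negbTE Hx; apply/eqP; apply: contraT => /H; by rewrite Hx andbF.
Timeout 10 rewrite [RHS](bigID (fun x => x \in L1)) /= [X in _ + X]big1 ?addr0; last first.
  move=> x /negbTE Hx; apply/eqP; apply: contraT => /H; by rewrite Hx.
Timeout 10 rewrite -[LHS]big_filter -[RHS]big_filter.
Timeout 10 apply: perm_big.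
Timeout 10 apply: uniq_perm; try exact: filter_uniq.
by move=> x; rewrite !mem_filter andbC.
Qed.

Lemma CL (D : Type) (Hs : (D -> R) -> Prop) (n : nat) :
  dim_le Hs n ->
  forall a (h : 'I_a -> D -> R), (forall l, Hs (h l)) ->
  exists b, (a <= b + n)%N /\ exists lam : 'I_b -> 'I_a -> R,
     lin_indep lam /\ forall q z, \sum_(l < a) lam q l * h l z = 0.
Proof.
move=> Hdim; elim=> [|a IH] h Hh.
  exists 0%N; split => //; exists (fun _ _ => 0); split; first by move=> c _ [].
  by move=> [].
have [Hi|Hni] := pselect (lin_indep h).
  exists 0%N; split; first by rewrite add0n; exact: Hdim Hh Hi.
  exists (fun _ _ => 0); split; first by move=> c _ [].
  by move=> [].
move: Hni; rewrite /lin_indep => /existsNP [c] /not_implyP [Hc] /existsNP [p Hp].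
have [b [Hab [lam' [Hind' Hrel']]]] := IH (fun l => h (lift p l)) (fun l => Hh _).
pose ext (mu : 'I_a -> R) : 'I_a.+1 -> R :=
  fun l => if unlift p l is Some l' then mu l' else 0.
pose lam (q : 'I_b.+1) : 'I_a.+1 -> R :=
  if unlift ord0 q is Some q' then ext (lam' q') else c.
exists b.+1; split; first by rewrite addSn ltnS.
exists lam; split.
  move=> mu Hmu.
  have Hp0 : mu ord0 = 0.
    have := Hmu p; rewrite big_ord_recl /lam unlift_none.
    rewrite big1 ?addr0; last first.
      by move=> q _; rewrite liftK /ext unlift_none mulr0.
    have Hp1 : (c p == 0) = false by apply/negbTE/eqP.
    by move/eqP; rewrite mulf_eq0 Hp1 orbF => /eqP.
  have Hl : forall q, mu (lift ord0 q) = 0.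
    apply: Hind' => l'; have := Hmu (lift p l').
    rewrite big_ord_recl /lam unlift_none Hp0 mul0r add0r.
    move=> H; rewrite -[RHS]H; apply: eq_bigr => i _.
    by rewrite liftK /ext liftK.
  move=> i; case: (unliftP ord0 i) => [q ->|->] //.
move=> q z; rewrite /lam; case: (unliftP ord0 q) => [q' _ | _].
  rewrite (bigD1_ord p) //= /ext unlift_none mul0r add0r.
  under eq_bigr do rewrite liftK.
  exact: Hrel'.
exact: Hc.
Qed.


Definition ds (a : nat -> R) (n : nat) := a n - a n.+1.
Definition dh (h : nat) (a : nat -> R) (n : nat) := a n - a (n + h)%N.

Lemma iter_ds_dh i h a n : iter i ds (dh h a) n = dh h (iter i ds a) n.
Proof.
elim: i n => [|i IH] n //=.
rewrite /ds IH IH /dh /= addSn.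
by rewrite -!/(iter i ds a _) ; lra.
Qed.

Lemma dh_const (e : nat -> R) c : (forall n, e n - e n.+1 = c) ->
  forall h n, e n - e (n + h)%N = h%:R * c.
Proof.
move=> He; elim=> [|h IH] n; first by rewrite addn0 subrr mul0r.
rewrite addnS mulrSr mulrDl mul1r -(IH n); have := He (n + h)%N; lra.
Qed.

Lemma dh_iter h d : forall a c, (forall n, iter d ds a n = c) ->
  iter d (dh h) a 0%N = (h%:R) ^+ d * c.
Proof.
elim: d => [|d IH] a c Hc; first by rewrite expr0 mul1r; exact: Hc.
rewrite iterSr (IH _ (h%:R * c)) ?exprSr ?mulrA //.
move=> n; rewrite iter_ds_dh /dh.
by apply: dh_const => m; exact: Hc.
Qed.

Lemma dh_bound h j : forall (a : nat -> R) M n, (forall i, (i <= n + j * h)%N -> `|a i| <= M) ->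
  `|iter j (dh h) a n| <= 2 ^+ j * M.
Proof.
elim: j => [|j IH] a M n Ha.
  by rewrite expr0 mul1r; apply: Ha; rewrite mul0n addn0.
rewrite iterS /dh exprS -mulrA.
have -> : forall X : R, 2 * X = X + X by move=> X; lra.
apply: le_trans (ler_normB _ _) _.
apply: lerD; apply: IH => i Hi; apply: Ha.
  by apply: leq_trans Hi _; rewrite leq_add2l leq_mul2r leqnSn orbT.
by apply: leq_trans Hi _; rewrite mulSn addnA.
Qed.

Definition clamp (a : R) := Num.min 1 (Num.max 0 a).

Lemma clamp_ge0 a : 0 <= clamp a.
Proof. rewrite /clamp !minElt !maxElt; case: (ltP 0 a) => ?; repeat case: ltP => ?; lra. Qed.

Lemma clamp_le1 a : clamp a <= 1.
Proof. rewrite /clamp !minElt !maxElt; case: (ltP 0 a) => ?; repeat case: ltP => ?; lra. Qed.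

Lemma clamp1 a : 1 <= a -> clamp a = 1.
Proof. move=> ?; rewrite /clamp !minElt !maxElt; case: (ltP 0 a) => ?; repeat case: ltP => ?; lra. Qed.

Lemma clamp0 a : a <= 0 -> clamp a = 0.
Proof. move=> ?; rewrite /clamp !minElt !maxElt; case: (ltP 0 a) => ?; repeat case: ltP => ?; lra. Qed.

Lemma clamp_lip a b : `|clamp a - clamp b| <= `|a - b|.
Proof.
have h1 := ler_norm (a - b); have h2 := ler_norm (b - a).
rewrite distrC in h2.
rewrite ler_norml; apply/andP.
rewrite /clamp !minElt !maxElt; case: (ltP 0 a) => ?; case: (ltP 0 b) => ?; repeat case: ltP => ?; split; lra.
Qed.

End Generic.


Section Graph.
Variables (R : realType) (V : eqType) (adj : V -> seq V) (w : V -> V -> R)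
  (m : V -> R) (rho : V -> V -> R).
Hypothesis Hadj_uniq : forall x, uniq (adj x).
Hypothesis Hadj_sym : forall x y, (y \in adj x) = (x \in adj y).
Hypothesis Hw_pos : forall x y, y \in adj x -> 0 < w x y.
Hypothesis Hw_sym : forall x y, w x y = w y x.
Hypothesis Hm_pos : forall x, 0 < m x.
Hypothesis Hrho : pseudometric rho.
Hypothesis Hintr : forall x, \sum_(y <- adj x) w x y * rho x y ^+ 2 <= m x.

Local Notation lap := (laplacian adj w m).

Lemma swap_sum (L : seq V) (F : V -> V -> R) : uniq L ->
  (forall x y, y \in adj x -> F x y != 0 -> (x \in L) && (y \in L)) ->
  \sum_(x <- L) \sum_(y <- adj x) F x y = \sum_(x <- L) \sum_(y <- adj x) F y x.
Proof.
move=> uL HF.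
have E1 : forall G : V -> V -> R,
    (forall x y, y \in adj x -> G x y != 0 -> (x \in L) && (y \in L)) ->
    \sum_(x <- L) \sum_(y <- adj x) G x y =
    \sum_(x <- L) \sum_(y <- L) (if y \in adj x then G x y else 0).
  move=> G HG; rewrite big_seq [RHS]big_seq; apply: eq_bigr => x xL.
  rewrite [LHS](eq_big_seq (fun y => if y \in adj x then G x y else 0)); last first.
    by move=> y ->.
  apply: sum_supp => // y; case: ifP => [yx /(HG _ _ yx) /andP [_ yL]|_].
    by rewrite yL andbT.
  by rewrite eqxx.
rewrite E1 // E1; last first.
  move=> x y yx /(HF _ _); rewrite -Hadj_sym => /(_ yx) /andP [-> ->] //.
rewrite [RHS]exchange_big /=; apply: eq_bigr => x _; apply: eq_bigr => y _.
by rewrite Hadj_sym.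
Qed.

Lemma energy_ineq (L : seq V) (eta f : V -> R) (Rr : R) : uniq L -> 0 < Rr ->
  (forall x y, y \in adj x -> (eta x != 0) || (eta y != 0) -> (x \in L) && (y \in L)) ->
  (forall x y, (eta x - eta y) ^+ 2 <= rho x y ^+ 2 / Rr ^+ 2) ->
  \sum_(x <- L) m x * (eta x ^+ 2 * f x * lap f x)
    <= (\sum_(x <- L) m x * f x ^+ 2) / (2 * Rr ^+ 2).
Proof.
move=> uL HR Hsupp Hlip.
pose F x y := w x y * (eta x ^+ 2 * f x * (f y - f x)).
pose Bt x y := w x y * ((eta x - eta y) ^+ 2 * f x ^+ 2) / 2.
have E1 : \sum_(x <- L) m x * (eta x ^+ 2 * f x * lap f x) =
          \sum_(x <- L) \sum_(y <- adj x) F x y.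
  apply: eq_bigr => x _; rewrite /laplacian !mulr_sumr; apply: eq_bigr => y _.
  rewrite /F; have := Hm_pos x; rewrite lt0r => /andP [hm _]; by field.
have E2 : \sum_(x <- L) \sum_(y <- adj x) F x y <=
          \sum_(x <- L) \sum_(y <- adj x) Bt x y.
  rewrite -subr_ge0 -sumrB.
  set H := fun x y => Bt x y - F x y.
  have -> : \sum_(i <- L) (\sum_(y <- adj i) Bt i y - \sum_(y <- adj i) F i y) =
            \sum_(x <- L) \sum_(y <- adj x) H x y.
    by apply: eq_bigr => x _; rewrite sumrB.
  have HS : \sum_(x <- L) \sum_(y <- adj x) H x y = \sum_(x <- L) \sum_(y <- adj x) H y x.
    apply: swap_sum => // x y yx HH; apply: Hsupp yx _.
    apply: contraTT HH => /norP [/negbNE/eqP e1 /negbNE/eqP e2]; rewrite negbK.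
    by apply/eqP; rewrite /H /Bt /F e1 e2; ring.
  have -> : \sum_(x <- L) \sum_(y <- adj x) H x y =
    (\sum_(x <- L) \sum_(y <- adj x) H x y + \sum_(x <- L) \sum_(y <- adj x) H y x) / 2.
    by rewrite -HS; field.
  rewrite -big_split /=.
  apply: divr_ge0; last by [].
  apply: sumr_ge0 => x _; rewrite -big_split /= big_seq; apply: sumr_ge0 => y yx.
  have -> : H x y + H y x = w x y * ((eta x * f x - eta y * f y) ^+ 2 +
      (eta x - eta y) ^+ 2 * (f x - f y) ^+ 2 / 2).
    by rewrite /H /Bt /F (Hw_sym y x); field.
  apply: mulr_ge0; first exact: ltW (Hw_pos yx).
  by apply: addr_ge0; [exact: sqr_ge0 | apply: divr_ge0 => //; apply: mulr_ge0; exact: sqr_ge0].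
rewrite E1; apply: le_trans E2 _.
rewrite mulr_suml; apply: ler_sum => x _.
have HR2 : Rr ^+ 2 != 0 by rewrite expf_neq0 // gt_eqF.
apply: (@le_trans _ _ (\sum_(y <- adj x) (w x y * f x ^+ 2 / 2) * (rho x y ^+ 2 / Rr ^+ 2))).
  rewrite big_seq [leRHS]big_seq; apply: ler_sum => y yx.
  have -> : Bt x y = (w x y * f x ^+ 2 / 2) * (eta x - eta y) ^+ 2 by rewrite /Bt; field.
  apply: ler_wpM2l; last exact: Hlip.
  apply: divr_ge0 => //; apply: mulr_ge0; [exact: ltW (Hw_pos yx)|exact: sqr_ge0].
have -> : \sum_(y <- adj x) (w x y * f x ^+ 2 / 2) * (rho x y ^+ 2 / Rr ^+ 2) =
  (\sum_(y <- adj x) w x y * rho x y ^+ 2) * (f x ^+ 2 / (2 * Rr ^+ 2)).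
  by rewrite mulr_suml; apply: eq_bigr => y _; field; rewrite gt_eqF.
rewrite /= -mulrA.
apply: ler_wpM2r; last exact: Hintr.
by apply: divr_ge0; [exact: sqr_ge0|apply: mulr_ge0 => //; exact: sqr_ge0].
Qed.


Lemma sum_restrict (T : eqType) (L1 L2 : seq T) (F : T -> R) :
  uniq L1 -> uniq L2 -> {subset L1 <= L2} ->
  \sum_(x <- L1) F x = \sum_(x <- L2) (if x \in L1 then F x else 0).
Proof.
move=> u1 u2 sub; rewrite (eq_big_seq (fun x => if x \in L1 then F x else 0)).
  apply: sum_supp => // x; case: ifP => [xL _|_]; [by rewrite ?xL (sub x xL) | by rewrite eqxx].
by move=> x ->.
Qed.

Lemma sum_nat_mono (F : nat -> R) a b : (a <= b)%N -> (forall t, 0 <= F t) ->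
  \sum_(0 <= t < a) F t <= \sum_(0 <= t < b) F t.
Proof.
move=> ab H; rewrite [leRHS](big_cat_nat (leq0n a) ab) /= lerDl.
by apply: sumr_ge0 => t _.
Qed.

Variable s0 : R.
Hypothesis Hjump : forall x y, y \in adj x -> rho x y <= s0.
Variable p : V.
Variable ball : R -> seq V.
Hypothesis Hball_uniq : forall r, uniq (ball r).
Hypothesis Hball : forall r, 0 < r -> forall y, (y \in ball r) = (rho y p <= r).

Definition Dt (f : V -> nat -> R) x t := f x t - f x t.+1.
Definition sol (f : V -> nat -> R) := forall x t, f x t - f x t.+1 = lap (fun y => f y t) x.
Definition Ien (f : V -> nat -> R) (N : nat) :=
  \sum_(0 <= t < N * N) \sum_(x <- ball N%:R) m x * f x t ^+ 2.

Lemma rho_sym x y : rho x y = rho y x.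
Proof. by case: Hrho. Qed.
Lemma rho_tri x y z : rho x z <= rho x y + rho y z.
Proof. by case: Hrho. Qed.
Lemma rho_ge0 x y : 0 <= rho x y.
Proof. by case: Hrho. Qed.

Section Cutoff.
Variable Rr : R.
Hypothesis HRr : 0 < Rr.
Definition etaR x := clamp ((2 * Rr - rho x p) / Rr).

Lemma etaR_lip x y : (etaR x - etaR y) ^+ 2 <= rho x y ^+ 2 / Rr ^+ 2.
Proof.
have h := clamp_lip ((2 * Rr - rho x p) / Rr) ((2 * Rr - rho y p) / Rr).
have e : (2 * Rr - rho x p) / Rr - (2 * Rr - rho y p) / Rr = (rho y p - rho x p) / Rr.
  by field; rewrite gt_eqF.
rewrite e normrM normfV (gtr0_norm HRr) in h.
have h1 := rho_tri y x p; have h2 := rho_tri x y p; rewrite (rho_sym y x) in h1.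
have h3 : `|rho y p - rho x p| <= rho x y by rewrite ler_norml; apply/andP; split; lra.
have h4 : `|etaR x - etaR y| <= rho x y / Rr.
  rewrite /etaR; apply: le_trans h _; apply: ler_wpM2r => //; by rewrite invr_ge0 ltW.
have := rho_ge0 x y => h5.
move: h4; rewrite ler_norml => /andP [h6 h7].
have h8 : 0 <= rho x y / Rr by apply: divr_ge0 => //; exact: ltW.
have : (etaR x - etaR y) ^+ 2 <= (rho x y / Rr) ^+ 2 by nra.
by rewrite expr_div_n.
Qed.

Lemma etaR_ge0 x : 0 <= etaR x. Proof. exact: clamp_ge0. Qed.
Lemma etaR_le1 x : etaR x <= 1. Proof. exact: clamp_le1. Qed.
Lemma etaR1 x : rho x p <= Rr -> etaR x = 1.
Proof.
move=> h; apply: clamp1; rewrite ler_pdivlMr //; lra.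
Qed.
Lemma etaR_supp x : etaR x != 0 -> rho x p < 2 * Rr.
Proof.
apply: contraNT; rewrite -leNgt => h; apply/eqP; apply: clamp0.
rewrite pmulr_lle0 ?invr_gt0 //; lra.
Qed.
End Cutoff.


Lemma lap_lin (g1 g2 : V -> R) x : lap (fun y => g1 y - g2 y) x = lap g1 x - lap g2 x.
Proof.
rewrite /laplacian -sumrB; apply: eq_bigr => y _; ring.
Qed.

Lemma sol_Dt f : sol f -> sol (Dt f).
Proof.
move=> Hf x t; rewrite /Dt Hf Hf -lap_lin; congr (lap _ x).
Qed.

Section Cacc.
Variable f : V -> nat -> R.
Hypothesis Hf : sol f.
Variable N : nat.
Hypothesis HN : (0 < N)%N.
Hypothesis HNs : s0 <= N%:R.
Let Rr : R := N%:R.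
Let L := ball (3 * N)%:R.
Let Q t := \sum_(x <- L) m x * (etaR Rr x ^+ 2 * f x t ^+ 2).
Let E t := \sum_(x <- L) m x * f x t ^+ 2.
Let S2 t := \sum_(x <- L) m x * (etaR Rr x ^+ 2 * Dt f x t ^+ 2).

Let HRr : 0 < Rr.
Proof. by rewrite /Rr ltr0n. Qed.

Let memL x : (x \in L) = (rho x p <= 3 * Rr).
Proof. by rewrite /L Hball natrM // mulr_gt0 // ltr0n. Qed.

Let suppL x y : y \in adj x -> (etaR Rr x != 0) || (etaR Rr y != 0) ->
  (x \in L) && (y \in L).
Proof.
move=> yx /orP [] /(etaR_supp HRr) h; rewrite !memL; have HNs' : s0 <= Rr := HNs.
  have := Hjump yx; have := rho_tri y x p; rewrite (rho_sym y x) => h1 h2.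
  have a1 : rho x p < 2 * Rr := h; have a2 : (0:R) < Rr := HRr; have a3 : s0 <= Rr := HNs.
  have a4 : rho y p <= rho x y + rho x p := h1; have a5 : rho x y <= s0 := h2.
  apply/andP; split; lra.
have xy : x \in adj y by rewrite -Hadj_sym.
have := Hjump xy; have := rho_tri x y p; rewrite (rho_sym x y) => h1 h2.
have a1 : rho y p < 2 * Rr := h; have a2 : (0:R) < Rr := HRr; have a3 : s0 <= Rr := HNs.
have a4 : rho x p <= rho y x + rho y p := h1; have a5 : rho y x <= s0 := h2.
apply/andP; split; lra.
Qed.

Let step t : Q t + S2 t <= Q t.+1 + E t / Rr ^+ 2.
Proof.
pose S1 := \sum_(x <- L) m x * (etaR Rr x ^+ 2 * f x t * lap (fun y => f y t) x).
have eQ : Q t.+1 = Q t - 2 * S1 + S2 t.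
  rewrite /Q /S2 /S1 mulr_sumr -sumrB -big_split /=; apply: eq_bigr => x _.
  have h1 : f x t.+1 = f x t - lap (fun y => f y t) x by rewrite -Hf; ring.
  have h2 : Dt f x t = lap (fun y => f y t) x by rewrite /Dt Hf.
  rewrite h1 h2; ring.
have hE := @energy_ineq L (etaR Rr) (fun y => f y t) Rr (Hball_uniq _) HRr suppL (etaR_lip HRr).
rewrite -/S1 -/(E t) in hE.
have e2 : E t / (2 * Rr ^+ 2) = (E t / Rr ^+ 2) / 2 by field; rewrite gt_eqF.
rewrite e2 in hE; rewrite eQ; lra.
Qed.

Let Q_ge0 t : 0 <= Q t.
Proof. apply: sumr_ge0 => x _; apply: mulr_ge0; [exact: ltW|apply: mulr_ge0; exact: sqr_ge0]. Qed.
Let E_ge0 t : 0 <= E t.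
Proof. apply: sumr_ge0 => x _; apply: mulr_ge0; [exact: ltW|exact: sqr_ge0]. Qed.
Let S2_ge0 t : 0 <= S2 t.
Proof. apply: sumr_ge0 => x _; apply: mulr_ge0; [exact: ltW|apply: mulr_ge0; exact: sqr_ge0]. Qed.
Let QE t : Q t <= E t.
Proof.
apply: ler_sum => x _; apply: ler_wpM2l; first exact: ltW.
rewrite -[leRHS]mul1r; apply: ler_wpM2r; first exact: sqr_ge0.
have h0 := etaR_ge0 Rr x; have h1 := etaR_le1 Rr x.
rewrite expr2; nra.
Qed.

Let tele b : \sum_(0 <= t < b) S2 t <= Q b + \sum_(0 <= t < b) (E t / Rr ^+ 2).
Proof.
elim: b => [|b IH]; first by rewrite !big_nil addr0.
rewrite !big_nat_recr //=; have := step b; lra.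
Qed.

Lemma caccioppoli : Ien (Dt f) N <= 2 / Rr ^+ 2 * Ien f (3 * N).
Proof.
pose T := (N * N)%N.
pose A := \sum_(0 <= t < T) S2 t.
pose C := \sum_(0 <= t < 2 * T) (E t / Rr ^+ 2).
have h1 : Ien (Dt f) N <= A.
  apply: ler_sum => t _.
  have sub : {subset ball Rr <= L}.
    move=> x; rewrite Hball // memL; have := rho_ge0 x p; lra.
  rewrite (sum_restrict _ (Hball_uniq _) (Hball_uniq _) sub).
  apply: ler_sum => x _; case: ifP => xb.
    rewrite etaR1 // ?expr1n ?mul1r //; by rewrite -Hball.
  apply: mulr_ge0; [exact: ltW|apply: mulr_ge0; exact: sqr_ge0].
have h2 : forall b, (T <= b <= 2 * T)%N -> A <= Q b + C.
  move=> b /andP [hb1 hb2].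
  apply: le_trans (sum_nat_mono hb1 S2_ge0) _.
  apply: le_trans (tele b) _; rewrite lerD2l.
  apply: sum_nat_mono => // t; apply: divr_ge0 => //; exact: sqr_ge0.
have h3 : \sum_(T <= b < 2 * T) A <= \sum_(T <= b < 2 * T) (Q b + C).
  rewrite big_nat [leRHS]big_nat; apply: ler_sum => b /andP [hb1 hb2].
  apply: h2; rewrite hb1 /=; exact: ltnW.
rewrite big_split /= !sumr_const_nat in h3.
have h4 : \sum_(T <= b < 2 * T) Q b <= \sum_(0 <= b < 2 * T) E b.
  rewrite [leRHS](big_cat_nat (leq0n T)) /=; last by rewrite mul2n -addnn leq_addr.
  rewrite -[leLHS]add0r; apply: lerD; first by apply: sumr_ge0 => *.
  by apply: ler_sum => b _.
have eT : (2 * T - T = T)%N by rewrite mul2n -addnn addnK.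
rewrite eT in h3.
have eC : C = (\sum_(0 <= t < 2 * T) E t) / Rr ^+ 2 by rewrite /C mulr_suml.
have h5 : \sum_(0 <= t < 2 * T) E t <= Ien f (3 * N).
  rewrite /Ien; apply: sum_nat_mono; last by move=> t; exact: E_ge0.
  rewrite /T; nia.
have eTR : (T%:R : R) = Rr ^+ 2 by rewrite /T natrM expr2.
rewrite -(mulr_natr A) -(mulr_natr C) eTR in h3.
apply: le_trans h1 _.
have h6 : A * Rr ^+ 2 <= 2 * \sum_(0 <= t < 2 * T) E t.
  apply: le_trans h3 _; rewrite eC divfK ?expf_neq0 ?gt_eqF //; lra.
rewrite -(ler_pM2r (exprn_gt0 2 HRr)) mulrAC divfK ?expf_neq0 ?gt_eqF //.
apply: le_trans h6 _; rewrite ler_pM2l //.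
Qed.

End Cacc.


Lemma sol_iter f j : sol f -> sol (iter j Dt f).
Proof. by move=> Hf; elim: j => [|j IH] //=; apply: sol_Dt. Qed.

Lemma Ien_ge0 f N : 0 <= Ien f N.
Proof.
apply: sumr_ge0 => t _; apply: sumr_ge0 => x _.
apply: mulr_ge0; [exact: ltW|exact: sqr_ge0].
Qed.

Lemma iter_cacc f : sol f -> forall j N, (0 < N)%N -> s0 <= N%:R ->
  Ien (iter j Dt f) N <= 2 ^+ j / N%:R ^+ (2 * j) * Ien f (3 ^ j * N).
Proof.
move=> Hf; elim=> [|j IH] N HN HNs.
  by rewrite /= expr0 muln0 expr0 divr1 mul1r mul1n.
rewrite iterS.
have HN3 : (0 < 3 * N)%N by rewrite muln_gt0.
have HNs3 : s0 <= (3 * N)%:R.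
  apply: le_trans HNs _; rewrite ler_nat leq_pmull //.
apply: le_trans (caccioppoli (sol_iter j Hf) HN HNs) _.
have HNR : (0 : R) < N%:R by rewrite ltr0n.
apply: le_trans (ler_wpM2l _ (IH _ HN3 HNs3)) _.
  by apply: divr_ge0 => //; apply: exprn_ge0; exact: ltW.
have e : (3 ^ j * (3 * N) = 3 ^ j.+1 * N)%N by rewrite expnS mulnCA mulnA.
rewrite e mulrA; apply: ler_wpM2r; first exact: Ien_ge0.
set n : R := N%:R.
rewrite natrM exprMn mulnS exprD [2 ^+ j.+1]exprS -/n.
set b : R := 3%:R ^+ (2 * j).
have hb : 1 <= b by apply: exprn_ege1; rewrite ler1n.
have hp : (0 : R) < n ^+ (2 * j) by apply: exprn_gt0.
have eL : 2 / n ^+ 2 * (2 ^+ j / (b * n ^+ (2 * j))) =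
          (2 * 2 ^+ j / (n ^+ 2 * n ^+ (2 * j))) / b.
  field; apply/and3P; split; rewrite gt_eqF //; lra.
rewrite eL ler_pdivrMr; last lra.
rewrite ler_peMr //; apply: divr_ge0; first by apply: mulr_ge0 => //; exact: exprn_ge0.
by apply: mulr_ge0; apply: exprn_ge0; exact: ltW.
Qed.

Definition growth (d : R) (f : V -> nat -> R) := exists C, 0 <= C /\
  forall r, 0 < r -> forall x t, rho x p <= r -> t%:R <= r ^+ 2 ->
    `|f x t| <= C * powR (1 + r) d.

Variables (alpha Cv : R).
Hypothesis Hvol : forall r, 0 < r -> \sum_(y <- ball r) m y <= Cv * powR (1 + r) alpha.

Lemma powR_le_nat (x a : R) (n : nat) : 1 <= x -> a <= n%:R -> powR x a <= x ^+ n.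
Proof. move=> h1 h2; rewrite -powR_mulrn; [exact: ler_powR| lra]. Qed.

Lemma Ien_bound f d C (D A : nat) : 0 <= C ->
  (forall r, 0 < r -> forall x t, rho x p <= r -> t%:R <= r ^+ 2 ->
    `|f x t| <= C * powR (1 + r) d) ->
  d <= D%:R -> alpha <= A%:R -> forall M, (0 < M)%N ->
  Ien f M <= (`|Cv| * C ^+ 2) * (1 + M%:R) ^+ (A + 2 * D + 2).
Proof.
move=> HC Hg hD hA M HM.
have HM0 : (0 : R) < M%:R by rewrite ltr0n.
have HM1 : (1 : R) <= 1 + M%:R by lra.
set B := C * (1 + M%:R) ^+ D.
have hB : 0 <= B by apply: mulr_ge0 => //; apply: exprn_ge0; lra.
have h1 : forall t, (t < M * M)%N -> \sum_(x <- ball M%:R) m x * f x t ^+ 2 <=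
     (`|Cv| * (1 + M%:R) ^+ A) * B ^+ 2.
  move=> t ht.
  apply: (@le_trans _ _ (\sum_(x <- ball M%:R) m x * B ^+ 2)).
    rewrite big_seq [leRHS]big_seq; apply: ler_sum => x xb.
    apply: ler_wpM2l; first exact: ltW.
    have hx : rho x p <= M%:R by rewrite -Hball.
    have ht' : (t%:R : R) <= M%:R ^+ 2.
      by rewrite expr2 -natrM ler_nat; apply: ltnW.
    have := Hg _ HM0 x t hx ht'.
    move=> h; have h' : `|f x t| <= B.
      apply: le_trans h _; apply: ler_wpM2l => //; exact: powR_le_nat.
    rewrite -real_normK ?num_real //.
    have := normr_ge0 (f x t); nra.
  rewrite -mulr_suml; apply: ler_wpM2r; first exact: sqr_ge0.
  apply: le_trans (Hvol HM0) _.
  apply: le_trans (ler_wpM2r (powR_ge0 _ _) (ler_norm Cv)) _.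
  apply: ler_wpM2l => //; exact: powR_le_nat.
apply: (@le_trans _ _ (\sum_(0 <= t < M * M) (`|Cv| * (1 + M%:R) ^+ A) * B ^+ 2)).
  rewrite /Ien big_nat [leRHS]big_nat; apply: ler_sum => t /andP [_ ht]; exact: h1.
rewrite sumr_const_nat subn0 -(mulr_natr _ (M * M)) natrM.
have e : (1 + M%:R : R) ^+ (A + 2 * D + 2) = (1 + M%:R) ^+ A * ((1 + M%:R) ^+ D) ^+ 2 * (1 + M%:R) ^+ 2.
  by rewrite -exprM -!exprD; congr (_ ^+ _); lia.
rewrite e /B.
have hh : (M%:R * M%:R : R) <= (1 + M%:R) ^+ 2 by rewrite expr2; nra.
have hX : 0 <= `|Cv| * (1 + M%:R) ^+ A * (C * (1 + M%:R) ^+ D) ^+ 2.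
  by apply: mulr_ge0; [apply: mulr_ge0 => //; apply: exprn_ge0; lra|exact: sqr_ge0].
apply: le_trans (ler_wpM2l hX hh) _.
set L1 := (X in X <= _); set R1 := (X in _ <= X).
have -> : R1 = L1 by rewrite /L1 /R1 exprMn; ring.
exact: lexx.
Qed.


Lemma sum_ge_term (T : eqType) (L : seq T) (F : T -> R) x :
  x \in L -> (forall y, 0 <= F y) -> F x <= \sum_(y <- L) F y.
Proof. move=> xL H; rewrite (big_rem x xL) /= lerDl; by apply: sumr_ge0 => *. Qed.

Lemma bound_gt (x : R) : x < (Num.bound `|x|)%:R.
Proof. apply: le_lt_trans (ler_norm x) _; exact: archi_boundP. Qed.

Lemma decay_alg (n K : R) (J P : nat) : 1 <= n -> 0 <= K -> (2 * P + 2 = 2 * J)%N ->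
  2 ^+ J / n ^+ (2 * J) * (K * (1 + 3 ^+ J * n) ^+ P) <=
  (2 ^+ J * K * (2 * 3 ^+ J) ^+ P) / n.
Proof.
move=> hn hK hJ.
have h3 : (1 : R) <= 3 ^+ J by apply: exprn_ege1; lra.
have h1 : 1 + 3 ^+ J * n <= 2 * 3 ^+ J * n by nra.
have h0 : 0 <= 1 + 3 ^+ J * n by nra.
have hP : (1 + 3 ^+ J * n) ^+ P <= (2 * 3 ^+ J) ^+ P * n ^+ P.
  rewrite -exprMn; apply: lerXn2r => //; rewrite nnegrE //; nra.
have hn0 : 0 < n by lra.
have hpos : 0 <= 2 ^+ J / n ^+ (2 * J) by apply: divr_ge0; apply: exprn_ge0; lra.
apply: le_trans (ler_wpM2l hpos (ler_wpM2l hK hP)) _.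
rewrite -hJ.
have e : 2 ^+ J / n ^+ (2 * P + 2) * (K * ((2 * 3 ^+ J) ^+ P * n ^+ P)) =
  (2 ^+ J * K * (2 * 3 ^+ J) ^+ P) / n / n ^+ P.+1.
  have -> : (2 * P + 2 = P + P.+1 + 1)%N by lia.
  rewrite !exprD expr1.
  by field; rewrite ?gt_eqF ?exprn_gt0.
have hK' : 0 <= 2 ^+ J * K * (2 * 3 ^+ J) ^+ P.
  apply: mulr_ge0; first by apply: mulr_ge0 => //; apply: exprn_ge0.
  apply: exprn_ge0; apply: mulr_ge0 => //; apply: exprn_ge0; lra.
have hK'' : 0 <= 2 ^+ J * K * (2 * 3 ^+ J) ^+ P / n by apply: divr_ge0 => //; lra.
by rewrite e ler_pdivrMr ?exprn_gt0 // ler_peMr ?exprn_ege1.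
Qed.


Lemma finite_time f d : sol f -> growth d f -> exists J, forall x t, iter J Dt f x t = 0.
Proof.
move=> Hf [C [HC Hg]].
pose D := Num.bound `|d|; pose A := Num.bound `|alpha|.
have hD : d <= D%:R := ltW (bound_gt d).
have hA : alpha <= A%:R := ltW (bound_gt alpha).
pose P := (A + 2 * D + 2)%N; pose J := P.+1.
pose K := `|Cv| * C ^+ 2; pose K' := 2 ^+ J * K * (2 * 3 ^+ J) ^+ P.
pose N0 := (Num.bound `|s0|).+1.
have hK : 0 <= K by apply: mulr_ge0 => //; exact: sqr_ge0.
have hdec : forall N, (N0 <= N)%N -> Ien (iter J Dt f) N <= K' / N%:R.
  move=> N hN.
  have HN : (0 < N)%N by apply: leq_trans hN.
  have HNs : s0 <= N%:R.
    apply: le_trans (ltW (bound_gt s0)) _; rewrite ler_nat; apply: leq_trans hN; exact: leqnSn.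
  apply: le_trans (iter_cacc Hf J HN HNs) _.
  have HM : (0 < 3 ^ J * N)%N by rewrite muln_gt0 expn_gt0.
  have hb := Ien_bound HC Hg hD hA HM.
  have hpos : (0 : R) <= 2 ^+ J / N%:R ^+ (2 * J).
    by apply: divr_ge0; apply: exprn_ge0 => //; exact: ler0n.
  apply: le_trans (ler_wpM2l hpos hb) _.
  rewrite natrM natrX; apply: decay_alg => //; last by rewrite /J; lia.
  by rewrite ler1n.
exists J => x t.
apply/eqP; apply: contraT => hne.
set g := iter J Dt f.
pose y := m x * g x t ^+ 2.
have hy : 0 < y by apply: mulr_gt0 => //; rewrite lt0r sqr_ge0 andbT expf_neq0.
pose N := maxn N0 (maxn (Num.bound `|rho x p|) (maxn t.+1 (Num.bound `|K' / y|))).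
have hN0 : (N0 <= N)%N by rewrite leq_maxl.
have HN : (0 < N)%N by apply: leq_trans hN0.
have hNr : (0 : R) < N%:R by rewrite ltr0n.
have hx : x \in ball N%:R.
  rewrite Hball //; apply: le_trans (ltW (bound_gt _)) _; rewrite ler_nat.
  by rewrite /N (leq_trans _ (leq_maxr _ _)) // leq_maxl.
have ht : t \in index_iota 0 (N * N).
  rewrite mem_index_iota leq0n /=; apply: leq_trans (leq_pmulr _ HN).
  by rewrite /N (leq_trans _ (leq_maxr _ _)) // (leq_trans _ (leq_maxr _ _)) // leq_maxl.
have h1 : y <= Ien g N.
  apply: le_trans (sum_ge_term (F := fun x' => m x' * g x' t ^+ 2) hx _) _.
    by move=> z; apply: mulr_ge0; [exact: ltW|exact: sqr_ge0].
  apply: (sum_ge_term (F := fun t' => \sum_(x' <- ball N%:R) m x' * g x' t' ^+ 2) ht).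
  move=> t'; apply: sumr_ge0 => z _; apply: mulr_ge0; [exact: ltW|exact: sqr_ge0].
have h2 := hdec N hN0.
have hb : K' / y < N%:R.
  apply: le_lt_trans (ler_norm _) _; apply: lt_le_trans (bound_gt _) _.
  rewrite normr_id ler_nat.
  by rewrite /N (leq_trans _ (leq_maxr _ _)) // (leq_trans _ (leq_maxr _ _)) // leq_maxr.
have h3 : K' / N%:R < y.
  have hb' : K' < N%:R * y by rewrite -ltr_pdivrMr.
  by rewrite ltr_pdivrMr // mulrC.
have := le_trans h1 h2; rewrite leNgt h3 //.
Qed.


Lemma powR_unbounded (q K : R) : 0 < q -> exists t : nat, (1 <= t)%N /\ K < powR t%:R q.
Proof.
move=> hq; pose z := powR (`|K| + 1) q^-1.
exists (Num.bound `|z|).+1; split => //.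
have hz : 0 <= z by exact: powR_ge0.
have hzt : z <= (Num.bound `|z|).+1%:R.
  apply: le_trans (ltW (bound_gt z)) _; rewrite ler_nat; exact: leqnSn.
have h1 : powR z q <= powR (Num.bound `|z|).+1%:R q.
  by apply: ge0_ler_powR; rewrite ?nnegrE ?ler0n //; exact: ltW.
apply: lt_le_trans h1; rewrite /z -powRrM mulVf ?gt_eqF // powRr1; last first.
  by apply: addr_ge0 => //.
have := ler_norm K; lra.
Qed.

Lemma iter_Dt_ds f j x n : iter j Dt f x n = iter j (@ds R) (f x) n.
Proof. by elim: j n => [|j IH] n //=; rewrite /Dt /ds !IH. Qed.

Lemma degree_bound f e : 0 <= e -> growth e f -> forall d,
  (forall x t, iter d.+1 Dt f x t = 0) -> forall x, iter d Dt f x 0%N != 0 ->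
  (2 * d)%:R <= e.
Proof.
move=> he [C [HC Hg]] d Hd x hx.
case: d Hd hx => [|d] Hd hx; first by rewrite muln0.
set d1 := d.+1.
set c := iter d1 Dt f x 0%N.
have hconst : forall n, iter d1 (@ds R) (f x) n = c.
  elim=> [|n IH]; first by rewrite /c iter_Dt_ds.
  rewrite -IH; have := Hd x n; rewrite iterS /Dt !iter_Dt_ds; lra.
set rho0 := rho x p.
have hr0 : 0 <= rho0 by exact: rho_ge0.
pose K := 2 ^+ d1 * C * powR (2 + rho0 + d1%:R) e.
have key : forall t : nat, (1 <= t)%N -> t%:R ^+ (2 * d1) * `|c| <= K * powR t%:R e.
  move=> t ht.
  have htR : (1 : R) <= t%:R by rewrite ler1n.
  pose r := 1 + rho0 + d1%:R * t%:R.
  have h0 : (0 : R) <= d1%:R * t%:R by apply: mulr_ge0; rewrite ler0n.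
  have hr : 0 < r by rewrite /r; lra.
  have hM : forall i, (i <= 0 + d1 * (t * t))%N -> `|f x i| <= C * powR (1 + r) e.
    move=> i hi.
    have hrx : rho x p <= r by rewrite /r -/rho0; lra.
    have hd1 : (1 : R) <= d1%:R by rewrite ler1n.
    have hi' : (i%:R : R) <= d1%:R * (t%:R * t%:R) by rewrite -!natrM ler_nat; move: hi; rewrite add0n.
    have hA : d1%:R * (t%:R * t%:R) <= (d1%:R * t%:R) ^+ 2 :> R.
      have : (0:R) <= d1%:R * t%:R * t%:R * (d1%:R - 1).
        apply: mulr_ge0; last lra.
        apply: mulr_ge0 => //; lra.
      rewrite expr2; nra.
    have hB : (d1%:R * t%:R) ^+ 2 <= r ^+ 2 :> R.
      rewrite !expr2 /r; nra.
    have hir : (i%:R : R) <= r ^+ 2 by lra.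
    exact: Hg hr x i hrx hir.
  have hb := dh_bound hM.
  rewrite (dh_iter (t * t) hconst) in hb.
  rewrite normrM normrX in hb.
  have e1 : t%:R ^+ (2 * d1) = `|(t * t)%:R| ^+ d1 :> R.
    by rewrite normr_nat natrM -expr2 -exprM.
  rewrite e1; apply: le_trans hb _.
  have e2 : 1 + r <= (2 + rho0 + d1%:R) * t%:R.
    rewrite /r; have : (0 : R) <= (2 + rho0) * (t%:R - 1) by apply: mulr_ge0; lra.
    lra.
  have h3 : powR (1 + r) e <= powR (2 + rho0 + d1%:R) e * powR t%:R e.
    have hd0 : (0:R) <= d1%:R by rewrite ler0n.
    have ht0 : (0:R) <= t%:R by rewrite ler0n.
    have hx1 : 0 <= 1 + r by lra.
    have hx2 : 0 <= (2 + rho0 + d1%:R) * t%:R by apply: mulr_ge0; lra.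
    rewrite -powRM; try lra.
    by apply: ge0_ler_powR; rewrite ?nnegrE.
  rewrite /K -!mulrA; apply: ler_wpM2l; first exact: exprn_ge0.
  apply: ler_wpM2l => //.
have : ~ (e < (2 * d1)%:R).
  move=> hlt.
  have hq : 0 < (2 * d1)%:R - e by lra.
  have hc : 0 < `|c| by rewrite normr_gt0.
  have [t [ht hK]] := powR_unbounded (K / `|c|) hq.
  have hk := key t ht.
  have htp : (0 : R) < t%:R by rewrite ltr0n.
  have hpe : 0 < powR t%:R e by apply: powR_gt0.
  rewrite -powR_mulrn in hk; last exact: ltW.
  have e3 : (2 * d1)%:R = e + ((2 * d1)%:R - e) :> R by ring.
  rewrite e3 powRD in hk; last by apply/implyP => _; rewrite gt_eqF.
  set q := (2 * d1)%:R - e in hk hq hK.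
  have hk2 : K < powR t%:R q * `|c| by rewrite -ltr_pdivrMr.
  have hk3 : powR t%:R e * (powR t%:R q * `|c|) <= powR t%:R e * K.
    by rewrite mulrA [powR t%:R e * K]mulrC.
  rewrite ler_pM2l // in hk3; lra.
by move/negP; rewrite -leNgt.
Qed.


Lemma growth_Dt e f : 0 <= e -> growth e f -> growth e (Dt f).
Proof.
move=> he [C [HC Hg]]; exists (C * (1 + powR 2 e)); split.
  apply: mulr_ge0 => //; have := powR_ge0 2 e; lra.
move=> r hr x t hx ht.
have hr1 : 0 < r + 1 by lra.
have hx1 : rho x p <= r + 1 by lra.
have ht1 : (t.+1%:R : R) <= (r + 1) ^+ 2.
  rewrite -addn1 natrD; have : (0:R) <= r by lra.
  move=> h0; rewrite expr2; move: ht; rewrite expr2 => ht; nra.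
have h1 := Hg r hr x t hx ht.
have h2 := Hg (r + 1) hr1 x t.+1 hx1 ht1.
have h3 : powR (1 + (r + 1)) e <= powR 2 e * powR (1 + r) e.
  rewrite -powRM; [|lra|lra].
  apply: ge0_ler_powR; rewrite ?nnegrE; lra.
rewrite /Dt; apply: le_trans (ler_normB _ _) _.
have h4 : C * powR (1 + (r + 1)) e <= C * (powR 2 e * powR (1 + r) e).
  exact: ler_wpM2l.
have e1 : C * (1 + powR 2 e) * powR (1 + r) e =
  C * powR (1 + r) e + C * (powR 2 e * powR (1 + r) e) by ring.
rewrite e1; lra.
Qed.

Lemma growth_iter e f j : 0 <= e -> growth e f -> growth e (iter j Dt f).
Proof. by move=> he hg; elim: j => [|j IH] //=; apply: growth_Dt. Qed.

Lemma growth_lin e a (lam : 'I_a -> R) (F : 'I_a -> V -> nat -> R) :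
  (forall l, growth e (F l)) -> growth e (fun x t => \sum_(l < a) lam l * F l x t).
Proof.
move=> HF.
have [Cf HCf] := choice HF.
exists (\sum_(l < a) `|lam l| * Cf l); split.
  apply: sumr_ge0 => l _; apply: mulr_ge0 => //; by case: (HCf l).
move=> r hr x t hx ht.
apply: le_trans (ler_norm_sum _ _ _) _.
rewrite mulr_suml; apply: ler_sum => l _.
rewrite normrM -mulrA; apply: ler_wpM2l => //.
by case: (HCf l) => _ H; apply: H.
Qed.

Lemma lap_sum a (lam : 'I_a -> R) (g : 'I_a -> V -> R) x :
  lap (fun y => \sum_(l < a) lam l * g l y) x = \sum_(l < a) lam l * lap (g l) x.
Proof.
rewrite /laplacian.
have -> : \sum_(l < a) lam l * (\sum_(y <- adj x) w x y / m x * (g l y - g l x)) =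
   \sum_(l < a) \sum_(y <- adj x) lam l * (w x y / m x * (g l y - g l x)).
  by apply: eq_bigr => l _; rewrite mulr_sumr.
rewrite exchange_big /=; apply: eq_bigr => y _.
rewrite -sumrB mulr_sumr; apply: eq_bigr => l _; ring.
Qed.

Lemma sol_lin a (lam : 'I_a -> R) (F : 'I_a -> V -> nat -> R) :
  (forall l, sol (F l)) -> sol (fun x t => \sum_(l < a) lam l * F l x t).
Proof.
move=> HF x t; rewrite lap_sum -sumrB; apply: eq_bigr => l _.
by rewrite -HF; ring.
Qed.

Lemma iter_lin a (lam : 'I_a -> R) (F : 'I_a -> V -> nat -> R) j x t :
  iter j Dt (fun x t => \sum_(l < a) lam l * F l x t) x t =
  \sum_(l < a) lam l * iter j Dt (F l) x t.
Proof.
elim: j t => [|j IH] t //=.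
by rewrite /Dt !IH -sumrB; apply: eq_bigr => l _; ring.
Qed.

Lemma iter_const f j : (forall x t, iter j.+1 Dt f x t = 0) ->
  forall x t, iter j Dt f x t = iter j Dt f x 0%N.
Proof.
move=> H x; elim=> [|t IH] //; rewrite -IH.
have := H x t; rewrite iterS /Dt; lra.
Qed.

Lemma iter_zero f j : (forall x t, iter j Dt f x t = 0) ->
  forall i x t, iter (i + j) Dt f x t = 0.
Proof.
move=> H; elim=> [|i IH] x t; first exact: H.
by rewrite addSn iterS /Dt !IH subrr.
Qed.

Lemma harm_of f e j : 0 <= e -> sol f -> growth e f ->
  (forall x t, iter j.+1 Dt f x t = 0) ->
  harmonic_poly adj w m rho e (fun x => iter j Dt f x 0%N).
Proof.
move=> he Hf Hg H; split.
  move=> x; have := sol_iter j Hf x 0%N; rewrite -[iter j Dt f x 0%N - _]/(iter j.+1 Dt f x 0%N).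
  by rewrite H => <-.
have [C [HC Hc]] := growth_iter j he Hg.
exists p, C => r hr x hx; apply: Hc => //.
by rewrite expr2 mulr_ge0 //; exact: ltW.
Qed.


Lemma claim e n : 0 <= e -> dim_le (harmonic_poly adj w m rho e) n ->
  forall j a (F : 'I_a -> V -> nat -> R),
  (forall l, [/\ sol (F l), growth e (F l) & forall x t, iter j Dt (F l) x t = 0]) ->
  lin_indep (fun l => uncurry_fun (F l)) -> (a <= j * n)%N.
Proof.
move=> he Hdim; elim=> [|j IH] a F HF Hind.
  case: a F HF Hind => [//|a] F HF Hind.
  have := Hind (fun _ => 1) _ ord0.
  have H : forall z, \sum_(i < a.+1) 1 * uncurry_fun (F i) z = 0.
    move=> [x t]; rewrite big1 // => i _; rewrite /uncurry_fun /=.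
    by case: (HF i) => _ _ /(_ x t) /= ->; rewrite mulr0.
  by move/(_ H)/eqP; rewrite oner_eq0.
pose h l := fun x => iter j Dt (F l) x 0%N.
have Hh : forall l, harmonic_poly adj w m rho e (h l).
  by move=> l; case: (HF l) => H1 H2 H3; exact: harm_of.
have [b [Hab [lam [Hlam Hrel]]]] := CL Hdim Hh.
pose G q := fun x t => \sum_(l < a) lam q l * F l x t.
have Hb : (b <= j * n)%N.
  apply: (IH b G).
    move=> q; split.
    - by apply: sol_lin => l; case: (HF l).
    - by apply: growth_lin => l; case: (HF l).
    - move=> x t; rewrite iter_lin -[RHS](Hrel q x); apply: eq_bigr => l _; congr (_ * _).
      by case: (HF l) => _ _ H0; rewrite /h (iter_const H0).
  move=> mu Hmu.
  have H1 : forall l, \sum_(q < b) mu q * lam q l = 0.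
    apply: Hind => -[x t] /=.
    have Hmu' := Hmu (x, t); rewrite /uncurry_fun /= in Hmu'; rewrite -[RHS]Hmu' /G.
    under eq_bigr do rewrite mulr_suml.
    rewrite exchange_big /=; apply: eq_bigr => q _.
    by rewrite mulr_sumr; apply: eq_bigr => l _; rewrite mulrA.
  exact: Hlam H1.
rewrite mulSn; apply: leq_trans Hab _; rewrite addnC leq_add2l //.
Qed.


Lemma final_bound (k : R) (n N : nat) (u : 'I_N -> V -> nat -> R) : 1 <= k ->
  dim_le (harmonic_poly adj w m rho (2 * k)) n ->
  (forall i, sol (u i) /\ growth (2 * k) (u i)) ->
  lin_indep (fun i => uncurry_fun (u i)) ->
  (N%:R : R) <= (k + 1) * n%:R.
Proof.
move=> hk Hdim Hu Hind.
have he : 0 <= 2 * k by lra.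
have hex : exists j : nat, k < j%:R.
  exists (Num.bound `|k|); exact: bound_gt.
case: (ex_minnP hex) => J0 hJ0 hmin.
have hJ0pos : (0 < J0)%N.
  rewrite lt0n; apply/eqP => e0; rewrite e0 in hJ0; lra.
have hJ0k : (J0%:R : R) <= k + 1.
  rewrite leNgt; apply/negP => hlt.
  have : k < J0.-1%:R.
    have e1 : (J0%:R : R) = J0.-1%:R + 1 by rewrite natr1 prednK.
    lra.
  move/hmin; rewrite -ltnS prednK //; by rewrite ltnn.
have hz : forall i x t, iter J0 Dt (u i) x t = 0.
  move=> i; have [Hs Hg] := Hu i.
  have [J HJ] := finite_time Hs Hg.
  have down : forall mm, (forall x t, iter (mm + J0) Dt (u i) x t = 0) ->
      forall x t, iter J0 Dt (u i) x t = 0.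
    elim=> [|mm IH] H; first exact: H.
    apply: IH => x t; apply/eqP; apply: contraT => hne.
    have H' : forall x t, iter (mm + J0).+1 Dt (u i) x t = 0 by move=> *; rewrite -addSn H.
    rewrite (iter_const H') in hne.
    have := degree_bound he Hg H' hne.
    have : (J0%:R : R) <= (mm + J0)%:R by rewrite ler_nat leq_addl.
    rewrite natrM natrD; lra.
  case: (leqP J J0) => hJJ.
    by move=> x t; rewrite -(subnK hJJ); apply: iter_zero.
  apply: (down (J - J0)%N); rewrite subnK //; exact: ltnW.
have hN := @claim (2 * k) n he Hdim J0 N u (fun i => And3 (Hu i).1 (Hu i).2 (hz i)) Hind.
apply: le_trans (_ : (J0 * n)%:R <= _).
  by rewrite ler_nat.
rewrite natrM; apply: ler_wpM2r => //; exact: ler0n.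
Qed.

End Graph.


Lemma anc_growth (R : realType) (V : eqType) (adj : V -> seq V) (w : V -> V -> R)
  (m : V -> R) (rho : V -> V -> R) (p : V) (e : R) (u : V -> nat -> R) :
  pseudometric rho -> 0 <= e -> ancient_poly adj w m rho e u -> growth rho p e u.
Proof.
move=> [_ _ Hge0 Htri] he [_ [x0 [C Hc]]].
pose dd := rho p x0.
have hdd : 0 <= dd := Hge0 p x0.
exists (`|C| * powR (1 + dd) e); split.
  by apply: mulr_ge0 => //; exact: powR_ge0.
move=> r hr x t hx ht.
have hr' : 0 < r + dd by lra.
have hx' : rho x x0 <= r + dd.
  have := Htri x p x0; rewrite -/dd; lra.
have ht' : (t%:R : R) <= (r + dd) ^+ 2.
  apply: le_trans ht _; rewrite !expr2; nra.
have h1 := Hc (r + dd) hr' x t hx' ht'.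
apply: le_trans h1 _.
have h2 : powR (1 + (r + dd)) e <= powR (1 + dd) e * powR (1 + r) e.
  rewrite -powRM; [|lra|lra].
  apply: ge0_ler_powR; rewrite ?nnegrE; nra.
apply: le_trans (ler_wpM2r (powR_ge0 _ _) (ler_norm C)) _.
rewrite -mulrA; apply: ler_wpM2l => //.
Qed.

Unset Implicit Arguments.

Theorem theorem1p3 (R : realType) (V : eqType)
  (adj : V -> seq V) (w : V -> V -> R) (m : V -> R) (rho : V -> V -> R) :
  weighted_graph adj w m ->
  intrinsic adj w m rho ->
  finite_balls rho ->
  finite_jump adj rho ->
  poly_volume_growth m rho ->
  forall k : R, 1 <= k ->
  forall n : nat, dim_le (harmonic_poly adj w m rho (2 * k)) n ->
  forall (N : nat) (u : 'I_N -> V -> nat -> R),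
    (forall i, ancient_poly adj w m rho (2 * k) (u i)) ->
    lin_indep (fun i => uncurry_fun (u i)) ->
    (N%:R : R) <= (k + 1) * n%:R.
Proof.
move=> [Hu [Hl [Hs [Hwp [Hws [Hmp Hconn]]]]]] [Hrho Hintr] Hfb [s0 Hjump]
  [p [alpha [Cv Hvol]]] k hk n Hdim N u Hanc Hind.
have H : forall r : R, exists s : seq V, 0 < r -> forall y, (y \in s) = (rho y p <= r).
  move=> r; case: (pselect (0 < r)) => hr.
    have [s hs] := Hfb p r hr; by exists s => _.
  by exists [::] => /hr.
have [bl Hbl] := choice H.
pose ball r := undup (bl r).
have Hball_uniq : forall r, uniq (ball r) by move=> r; exact: undup_uniq.
have Hball : forall r : R, 0 < r -> forall y, (y \in ball r) = (rho y p <= r).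
  by move=> r hr y; rewrite mem_undup Hbl.
have Hvol' : forall r : R, 0 < r -> \sum_(y <- ball r) m y <= Cv * powR (1 + r) alpha.
  move=> r hr; apply: Hvol => //; exact: Hball.
apply: (final_bound Hu Hs Hwp Hws Hmp Hrho Hintr Hjump Hball_uniq Hball Hvol' hk Hdim _ Hind).
move=> i; split; first exact: (Hanc i).1.
apply: (@anc_growth R V adj w m rho p (2 * k) (u i) Hrho _ (Hanc i)).
lra.
Qed.
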